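(* Let $\mathbf P=(P,\leq,{}',0,1)$ be a poset with complementation. Then the Dedekind-MacNeille completion $\mathrm{DM}(\mathbf P)$ is orthomodular if and only if $\mathbf P$ is a strongly $D$-continuous pseudo-orthomodular poset.
   Context: For $M\subseteq P$, $U(M)$, $L(M)$ are the sets of upper and lower bounds; $U(a,b)=U(\{a,b\})$ etc. For $B,C\subseteq P$, $B\le C$ means $b\le c$ for all $b\in B$, $c\in C$. A poset with complementation is a bounded poset with antitone involution $'$ ($x\le y\Rightarrow y'\le x'$, $x''=x$) with $L(x,x')=\{0\}$, $U(x,x')=\{1\}$; it is pseudo-orthomodular if $L(U(L(x,y),y'),y)=L(x,y)$ for all $x,y$. It is strongly $D$-continuous if for all $B,C\subseteq P$ with $B\le C$: $\bigwedge_{\mathbf P}\{g\in P\mid g\in C\text{ or } g'\in B\}=0$ if and only if every lower bound of $C$ in $P$ is below every upper bound of $B$ in $P$. The Dedekind-MacNeille completion $\mathrm{DM}(\mathbf P)$ is the complete lattice of subsets $B\subseteq P$ with $L(U(B))=B$ under inclusion, with antitone involution $X'=L(\{u'\mid u\in X\})$; a lattice with complementation is orthomodular if $x\vee y=((x\vee y)\wedge y')\vee y$ for all $x,y$. *)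

(* Defs.v *)
Set Implicit Arguments.

Section PosetDefs.
Variable T : Type.
Variable le : T -> T -> Prop.
Variable c : T -> T.
Variables z o : T.

Definition seteq (A B : T -> Prop) : Prop := forall x, A x <-> B x.

Definition Ub (M : T -> Prop) : T -> Prop := fun u => forall m, M m -> le m u.
Definition Lb (M : T -> Prop) : T -> Prop := fun l => forall m, M m -> le l m.

Definition pair (a b : T) : T -> Prop := fun x => x = a \/ x = b.
Definition add (M : T -> Prop) (a : T) : T -> Prop := fun x => M x \/ x = a.
Definition single (a : T) : T -> Prop := fun x => x = a.

Definition set_le (B C : T -> Prop) : Prop :=
  forall b d, B b -> C d -> le b d.

Definition is_inf (G : T -> Prop) (a : T) : Prop :=
  Lb G a /\ forall b, Lb G b -> le b a.

Definition poset_with_complementation : Prop :=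
  (forall x, le x x) /\
  (forall x y, le x y -> le y x -> x = y) /\
  (forall x y w, le x y -> le y w -> le x w) /\
  (forall x, le z x /\ le x o) /\
  (forall x y, le x y -> le (c y) (c x)) /\
  (forall x, c (c x) = x) /\
  (forall x, seteq (Lb (pair x (c x))) (single z)) /\
  (forall x, seteq (Ub (pair x (c x))) (single o)).

Definition pseudo_orthomodular : Prop :=
  forall x y, seteq (Lb (add (Ub (add (Lb (pair x y)) (c y))) y)) (Lb (pair x y)).

(* strongly D-continuous; "/\_P G = 0" read as: the infimum of G exists in P
   and equals 0 *)
Definition strongly_D_continuous : Prop :=
  forall B C : T -> Prop, set_le B C ->
    (is_inf (fun g => C g \/ B (c g)) z <->
     (forall a b, Lb C a -> Ub B b -> le a b)).

Definition DM (B : T -> Prop) : Prop := seteq (Lb (Ub B)) B.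
Definition dm_meet (X Y : T -> Prop) : T -> Prop := fun x => X x /\ Y x.
Definition dm_join (X Y : T -> Prop) : T -> Prop :=
  Lb (Ub (fun x => X x \/ Y x)).
Definition dm_compl (X : T -> Prop) : T -> Prop :=
  Lb (fun v => exists u, X u /\ v = c u).
Definition dm_bot : T -> Prop := Lb (Ub (fun _ => False)).
Definition dm_top : T -> Prop := fun _ => True.
Definition dm_le (X Y : T -> Prop) : Prop := forall x, X x -> Y x.

Definition DM_orthomodular : Prop :=
  (forall X, DM X -> DM (dm_compl X)) /\
  (forall X Y, DM X -> DM Y -> dm_le X Y -> dm_le (dm_compl Y) (dm_compl X)) /\
  (forall X, DM X -> seteq (dm_compl (dm_compl X)) X) /\
  (forall X, DM X -> seteq (dm_meet X (dm_compl X)) dm_bot) /\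
  (forall X, DM X -> seteq (dm_join X (dm_compl X)) dm_top) /\
  (forall X Y, DM X -> DM Y ->
     seteq (dm_join X Y) (dm_join (dm_meet (dm_join X Y) (dm_compl Y)) Y)).

End PosetDefs.

(* Main.v *)
Require Import Defs.

Section S.
Variables (T : Type) (le : T -> T -> Prop) (c : T -> T) (z o : T).
Hypothesis HP : poset_with_complementation le c z o.

Lemma p_refl x : le x x.
Proof. destruct HP as (H&_); apply H. Qed.
Lemma p_anti x y : le x y -> le y x -> x = y.
Proof. destruct HP as (_&H&_); apply H. Qed.
Lemma p_trans x y w : le x y -> le y w -> le x w.
Proof. destruct HP as (_&_&H&_); apply H. Qed.
Lemma p_bot x : le z x.
Proof. destruct HP as (_&_&_&H&_); apply H. Qed.
Lemma p_top x : le x o.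
Proof. destruct HP as (_&_&_&H&_); apply H. Qed.
Lemma p_canti x y : le x y -> le (c y) (c x).
Proof. destruct HP as (_&_&_&_&H&_); apply H. Qed.
Lemma p_inv x : c (c x) = x.
Proof. destruct HP as (_&_&_&_&_&H&_); apply H. Qed.
Lemma p_self x : le x (c x) -> x = z.
Proof.
  destruct HP as (_&_&_&_&_&_&H&_). intro Hx.
  apply (proj1 (H x x)). intros m [-> | ->]; [apply p_refl | exact Hx].
Qed.
Lemma p_unit m : le (c m) m -> m = o.
Proof.
  destruct HP as (_&_&_&_&_&_&_&H). intro Hm.
  apply (proj1 (H m m)). intros p [-> | ->]; [apply p_refl | exact Hm].
Qed.

Lemma LUL (S0 : T -> Prop) : DM le (Lb le S0).
Proof.
  intro x; split.
  - intros Hx m Hm. apply Hx. intros p Hp. apply Hp, Hm.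
  - intros Hx u Hu. apply Hu, Hx.
Qed.


Lemma gp1 X : DM le X -> DM le (dm_compl le c X).
Proof. intros _. apply LUL. Qed.

Lemma gp2 X Y : dm_le X Y -> dm_le (dm_compl le c Y) (dm_compl le c X).
Proof.
  intros H x Hx m [u [Hu ->]]. apply Hx. exists u. split; [apply H, Hu | reflexivity].
Qed.

Lemma gp3 X : DM le X -> seteq (dm_compl le c (dm_compl le c X)) X.
Proof.
  intros HX x; split.
  - intro Hx. apply (proj1 (HX x)). intros w Hw.
    rewrite <- (p_inv w). apply Hx. exists (c w); split; [|reflexivity].
    intros m [u [Hu ->]]. apply p_canti, Hw, Hu.
  - intros Hx m [u [Hu ->]]. rewrite <- (p_inv x). apply p_canti.
    apply Hu. exists x; split; [exact Hx | reflexivity].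
Qed.

Lemma gp4 X : DM le X -> seteq (dm_meet X (dm_compl le c X)) (dm_bot le).
Proof.
  intros HX x; split.
  - intros [Hx Hc]. assert (x = z).
    { apply p_self. apply Hc. exists x; split; [exact Hx | reflexivity]. }
    subst x. intros m _. apply p_bot.
  - intro Hx. assert (Hz : x = z).
    { apply p_anti; [apply Hx; intros m [] | apply p_bot]. }
    subst x. split.
    + apply (proj1 (HX z)). intros m _. apply p_bot.
    + intros m _. apply p_bot.
Qed.

Lemma gp5 X : seteq (dm_join le X (dm_compl le c X)) (@dm_top T).
Proof.
  intro x; split; [intros _; exact I|]. intros _ m Hm.
  assert (m = o).
  { apply p_unit. apply Hm. right. intros q [u [Hu ->]].
    apply p_canti, Hm. left. exact Hu. }
  subst m. apply p_top.
Qed.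

Lemma om_to_sdc :
  (forall X Y, DM le X -> DM le Y ->
     seteq (dm_join le X Y) (dm_join le (dm_meet (dm_join le X Y) (dm_compl le c Y)) Y)) ->
  strongly_D_continuous le c z.
Proof.
  intros Hlaw B C HBC; split.
  - intros [_ Hinf] a b Ha Hb.
    pose (Y := Lb le (Ub le B)). pose (Z := Lb le C).
    assert (H := proj1 (Hlaw Z Y (LUL _) (LUL _) a)).
    assert (Hj : dm_join le Z Y a).
    { intros m Hm. apply Hm. left. exact Ha. }
    specialize (H Hj). apply H. intros m [Hw | Hy].
    + destruct Hw as [Hw1 Hw2]. apply p_trans with z; [|apply p_bot].
      apply Hinf. intros g [Hg | Hg].
      * apply Hw1. intros p [Hp | Hp].
        -- apply Hp, Hg.
        -- apply Hp. intros q Hq. apply HBC; assumption.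
      * rewrite <- (p_inv g). apply Hw2. exists (c g). split; [|reflexivity].
        intros q Hq. apply Hq, Hg.
    + apply Hy, Hb.
  - intros Hle. split; [intros m _; apply p_bot|].
    intros l Hl. assert (l = z); [|subst l; apply p_refl].
    apply p_self. apply Hle.
    + intros m Hm. apply Hl. left. exact Hm.
    + intros q Hq. rewrite <- (p_inv q). apply p_canti. apply Hl. right.
      rewrite p_inv. exact Hq.
Qed.

Lemma sdc_to_po : strongly_D_continuous le c z -> pseudo_orthomodular le c.
Proof.
  intros SDC x y l; split.
  - intros Hl m [-> | ->].
    + pose (A := Lb le (pair x y)).
      pose (C := add (Ub le (add A (c y))) y).
      assert (HBC : set_le le A C).
      { intros b d Hb [Hd | ->].
        - apply Hd. left. exact Hb.
        - apply Hb. right. reflexivity. }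
      apply (proj1 (SDC A C HBC)).
      * split; [intros m _; apply p_bot|].
        intros w Hw. assert (w = z); [|subst w; apply p_refl].
        apply p_self. apply Hw. left. left. intros p [Hp | ->].
        -- rewrite <- (p_inv p). apply p_canti. apply Hw. right.
           rewrite p_inv. exact Hp.
        -- apply p_canti. apply Hw. left. right. reflexivity.
      * exact Hl.
      * intros q Hq. apply Hq. left. reflexivity.
    + apply Hl. right. reflexivity.
  - intros Hl m [Hm | ->].
    + apply Hm. left. exact Hl.
    + apply Hl. right. reflexivity.
Qed.

Lemma sdc_to_law : strongly_D_continuous le c z ->
  (forall X Y, DM le X -> DM le Y ->
     seteq (dm_join le X Y) (dm_join le (dm_meet (dm_join le X Y) (dm_compl le c Y)) Y)).
Proof.
  intros SDC X Y _ _ a; split.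
  - intros Ha b Hb.
    pose (W := dm_meet (dm_join le X Y) (dm_compl le c Y)).
    pose (B := fun x => W x \/ Y x).
    pose (C := Ub le (fun x => X x \/ Y x)).
    assert (HBC : set_le le B C).
    { intros p d [Hp | Hp] Hd.
      - apply (proj1 Hp), Hd.
      - apply Hd. right. exact Hp. }
    apply (proj1 (SDC B C HBC)); [|exact Ha|exact Hb].
    split; [intros m _; apply p_bot|].
    intros v Hv.
    assert (HW : W v).
    { split.
      - intros m Hm. apply Hv. left. exact Hm.
      - intros q [u [Hu ->]]. apply Hv. right. right. rewrite p_inv. exact Hu. }
    assert (v = z); [|subst v; apply p_refl].
    apply p_self. apply Hv. right. left. rewrite p_inv. exact HW.
  - intros Ha b Hb. apply Ha. intros p [Hp | Hp].
    + apply (proj1 Hp), Hb.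
    + apply Hb. right. exact Hp.
Qed.

End S.

Theorem theorem9 (T : Type) (le : T -> T -> Prop) (c : T -> T) (z o : T)
  (HP : poset_with_complementation le c z o) :
  DM_orthomodular le c <->
  (strongly_D_continuous le c z /\ pseudo_orthomodular le c).
Proof.
  split.
  - intros (_&_&_&_&_&Hlaw).
    assert (H : strongly_D_continuous le c z) by (eapply om_to_sdc; eauto).
    split; [exact H | eapply sdc_to_po; eauto].
  - intros [SDC _]. split; [|split; [|split; [|split; [|split]]]].
    + apply gp1.
    + intros X Y _ _. apply gp2.
    + eapply gp3; eauto.
    + eapply gp4; eauto.
    + intros X _. eapply gp5; eauto.
    + eapply sdc_to_law; eauto.
Qed.
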